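(* Let $(a:b:c)\in\mathbb{P}^2$ with $(a:b:c)\notin\{(1:\pm1:\pm1)\}\cup\{(1:0:0),(0:1:0),(0:0:1)\}$, and let $X=X_{(a:b:c)}$. If $(a^2-b^2)(a^2-c^2)(b^2-c^2)\neq0$ (equivalently, the blow-up $\widetilde X$ of $X$ along $C_1\cup C_2$ is smooth), then $F_1\cap F_2$ is the only $G$-invariant irreducible curve in $X$. If $(a^2-b^2)(a^2-c^2)(b^2-c^2)=0$ (so $\widetilde X$ is singular), then $X$ contains no $G$-invariant irreducible curves.
   Context: $\mathbb{P}(1,1,2)\times\mathbb{P}(1,1,2)$ has weighted coordinates $(s_1:t_1:w_1)$, $(s_2:t_2:w_2)$ ($s_i,t_i$ of weight 1, $w_i$ of weight 2). Put $q=as_1t_1s_2t_2+\tfrac{b+c}{4}(s_1^2s_2^2+t_1^2t_2^2)+\tfrac{b-c}{4}(s_1^2t_2^2+t_1^2s_2^2)$ and $X_{(a:b:c)}=\{w_1w_2=q\}$; $C_1=\{s_1=t_1=w_2=0\}$, $C_2=\{s_2=t_2=w_1=0\}$; $F_1=\{q=w_1=0\}$, $F_2=\{q=w_2=0\}$ (surfaces in $X$). $G\cong\mathbb{C}^*\rtimes(\mathbb{Z}/2\mathbb{Z})^3$ is the group of automorphisms of $X$ generated by $\tau_1:((s_1:t_1:w_1),(s_2:t_2:w_2))\mapsto((s_2:t_2:w_1),(s_1:t_1:w_2))$, $\tau_2:\mapsto((t_1:s_1:w_1),(t_2:s_2:w_2))$, $\tau_3:\mapsto((s_1:-t_1:w_1),(s_2:-t_2:w_2))$,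 and $\sigma_\lambda:\mapsto((s_1:t_1:\lambda w_1),(s_2:t_2:\lambda^{-1}w_2))$ for $\lambda\in\mathbb{C}^*$. *)

(* Defs.v *)
From mathcomp Require Import all_boot all_algebra.
From mathcomp Require Import Rstruct complex.
From mathcomp Require mpoly.
From Stdlib Require Import Reals.
Set Implicit Arguments. Unset Strict Implicit. Unset Printing Implicit Defensive.
Import GRing.Theory.
Local Open Scope ring_scope.

Notation C := (complex.complex Rdefinitions.R).

Definition pt := 'I_6 -> C.

Definition mk6 (x0 x1 x2 x3 x4 x5 : C) : pt :=
  fun i => nth 0 [:: x0; x1; x2; x3; x4; x5] (nat_of_ord i).

Definition s1 (v : pt) : C := v (@Ordinal 6 0 isT).
Definition t1 (v : pt) : C := v (@Ordinal 6 1 isT).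
Definition w1 (v : pt) : C := v (@Ordinal 6 2 isT).
Definition s2 (v : pt) : C := v (@Ordinal 6 3 isT).
Definition t2 (v : pt) : C := v (@Ordinal 6 4 isT).
Definition w2 (v : pt) : C := v (@Ordinal 6 5 isT).

(* U = (C^3 minus 0) x (C^3 minus 0); P(1,1,2) x P(1,1,2) = U modulo the torus Gm x Gm. *)
Definition inU (v : pt) : Prop :=
  ~ (s1 v = 0 /\ t1 v = 0 /\ w1 v = 0) /\ ~ (s2 v = 0 /\ t2 v = 0 /\ w2 v = 0).

Definition tact (m1 m2 : C) (v : pt) : pt :=
  mk6 (m1 * s1 v) (m1 * t1 v) (m1 ^+ 2 * w1 v)
      (m2 * s2 v) (m2 * t2 v) (m2 ^+ 2 * w2 v).

Definition same_point (u v : pt) : Prop :=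
  exists m1 m2 : C, m1 != 0 /\ m2 != 0 /\ v = tact m1 m2 u.

(* A subset of P(1,1,2) x P(1,1,2) is represented by its (torus-invariant)
   preimage in U. *)
Definition subsetP (Z Z' : pt -> Prop) : Prop := forall v, Z v -> Z' v.

Definition wclosed (Z : pt -> Prop) : Prop :=
  (forall v, Z v -> inU v) /\
  (forall v m1 m2, m1 != 0 -> m2 != 0 -> Z v -> Z (tact m1 m2 v)) /\
  exists S : mpoly.mpoly 6 C -> Prop,
    forall v, Z v <-> (inU v /\ forall p, S p -> mpoly.meval v p = 0).

Definition finite_points (Z : pt -> Prop) : Prop :=
  exists l : list pt, forall v, Z v -> exists u, List.In u l /\ same_point u v.

Definition irreducible_closed (Z : pt -> Prop) : Prop :=
  wclosed Z /\ (exists v, Z v) /\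
  forall Z1 Z2, wclosed Z1 -> wclosed Z2 ->
    (forall v, Z v <-> (Z1 v \/ Z2 v)) -> subsetP Z Z1 \/ subsetP Z Z2.

(* irreducible curve = irreducible closed subset of dimension 1: infinitely
   many points, and every proper closed subset is finite. *)
Definition irreducible_curve (Z : pt -> Prop) : Prop :=
  irreducible_closed Z /\ ~ finite_points Z /\
  forall Z', wclosed Z' -> subsetP Z' Z -> ~ subsetP Z Z' -> finite_points Z'.

Definition qf (a b c : C) (v : pt) : C :=
  a * s1 v * t1 v * s2 v * t2 v
  + (b + c) / 4%:R * (s1 v ^+ 2 * s2 v ^+ 2 + t1 v ^+ 2 * t2 v ^+ 2)
  + (b - c) / 4%:R * (s1 v ^+ 2 * t2 v ^+ 2 + t1 v ^+ 2 * s2 v ^+ 2).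

Definition Xabc (a b c : C) (v : pt) : Prop :=
  inU v /\ w1 v * w2 v = qf a b c v.

(* F1 cap F2 = { q = w1 = 0 } cap { q = w2 = 0 } *)
Definition F1capF2 (a b c : C) (v : pt) : Prop :=
  inU v /\ qf a b c v = 0 /\ w1 v = 0 /\ w2 v = 0.

Definition tau1 (v : pt) : pt := mk6 (s2 v) (t2 v) (w1 v) (s1 v) (t1 v) (w2 v).
Definition tau2 (v : pt) : pt := mk6 (t1 v) (s1 v) (w1 v) (t2 v) (s2 v) (w2 v).
Definition tau3 (v : pt) : pt := mk6 (s1 v) (- t1 v) (w1 v) (s2 v) (- t2 v) (w2 v).
Definition sigma (l : C) (v : pt) : pt :=
  mk6 (s1 v) (t1 v) (l * w1 v) (s2 v) (t2 v) (l^-1 * w2 v).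

(* G-invariance of a subset (G is generated by these automorphisms) *)
Definition G_invariant (Z : pt -> Prop) : Prop :=
  (forall v, Z (tau1 v) <-> Z v) /\
  (forall v, Z (tau2 v) <-> Z v) /\
  (forall v, Z (tau3 v) <-> Z v) /\
  (forall l v, l != 0 -> (Z (sigma l v) <-> Z v)).

Definition G_inv_curve_in_X (a b c : C) (Z : pt -> Prop) : Prop :=
  irreducible_curve Z /\ subsetP Z (Xabc a b c) /\ G_invariant Z.

(* Main.v *)
Require Import Defs.
From mathcomp Require Import all_boot all_algebra.
From mathcomp Require Import Rstruct complex.
From mathcomp Require Import mpoly.
From mathcomp Require Import ring lra.
From Stdlib Require Import Classical ClassicalEpsilon FunctionalExtensionality PropExtensionality.
Import GRing.Theory Num.Theory.
Local Open Scope ring_scope.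
Set Implicit Arguments. Unset Strict Implicit. Unset Printing Implicit Defensive.

Lemma mk6E0 x0 x1 x2 x3 x4 x5 : s1 (mk6 x0 x1 x2 x3 x4 x5) = x0. Proof. by []. Qed.
Lemma mk6E1 x0 x1 x2 x3 x4 x5 : t1 (mk6 x0 x1 x2 x3 x4 x5) = x1. Proof. by []. Qed.
Lemma mk6E2 x0 x1 x2 x3 x4 x5 : w1 (mk6 x0 x1 x2 x3 x4 x5) = x2. Proof. by []. Qed.
Lemma mk6E3 x0 x1 x2 x3 x4 x5 : s2 (mk6 x0 x1 x2 x3 x4 x5) = x3. Proof. by []. Qed.
Lemma mk6E4 x0 x1 x2 x3 x4 x5 : t2 (mk6 x0 x1 x2 x3 x4 x5) = x4. Proof. by []. Qed.
Lemma mk6E5 x0 x1 x2 x3 x4 x5 : w2 (mk6 x0 x1 x2 x3 x4 x5) = x5. Proof. by []. Qed.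
Definition mk6E := (mk6E0, mk6E1, mk6E2, mk6E3, mk6E4, mk6E5).

Lemma pt_ext (u v : pt) : s1 u = s1 v -> t1 u = t1 v -> w1 u = w1 v ->
  s2 u = s2 v -> t2 u = t2 v -> w2 u = w2 v -> u = v.
Proof.
rewrite /s1 /t1 /w1 /s2 /t2 /w2 => h0 h1 h2 h3 h4 h5.
apply: functional_extensionality => -[i hi].
case: i hi => [|[|[|[|[|[|i]]]]]] hi //;
  [ move: h0 | move: h1 | move: h2 | move: h3 | move: h4 | move: h5 ];
  by rewrite (bool_irrelevance hi isT).
Qed.

Lemma tactE m1 m2 v :
  (s1 (tact m1 m2 v) = m1 * s1 v) * (t1 (tact m1 m2 v) = m1 * t1 v) *
  (w1 (tact m1 m2 v) = m1 ^+ 2 * w1 v) * (s2 (tact m1 m2 v) = m2 * s2 v) *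
  (t2 (tact m1 m2 v) = m2 * t2 v) * (w2 (tact m1 m2 v) = m2 ^+ 2 * w2 v).
Proof. by []. Qed.

(* bivariate polynomials: outer variable = second argument *)
Definition ev (g : {poly {poly C}}) (x y : C) : C := (map_poly (horner_eval x) g).[y].

Lemma evD g h x y : ev (g + h) x y = ev g x y + ev h x y.
Proof. by rewrite /ev rmorphD hornerD. Qed.
Lemma evM g h x y : ev (g * h) x y = ev g x y * ev h x y.
Proof. by rewrite /ev rmorphM hornerM. Qed.
Lemma evN g x y : ev (- g) x y = - ev g x y.
Proof. by rewrite /ev rmorphN hornerN. Qed.
Lemma evB g h x y : ev (g - h) x y = ev g x y - ev h x y.
Proof. by rewrite evD evN. Qed.
Lemma evC c x y : ev (c%:P) x y = c.[x].
Proof. by rewrite /ev map_polyC hornerC. Qed.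
Lemma evX x y : ev 'X x y = y.
Proof. by rewrite /ev map_polyX hornerX. Qed.
Lemma ev1 x y : ev 1 x y = 1.
Proof. by rewrite /ev rmorph1 hornerC. Qed.
Lemma evXn g n x y : ev (g ^+ n) x y = ev g x y ^+ n.
Proof. by rewrite /ev rmorphXn horner_exp. Qed.

Definition ispoly2 (f : C -> C -> C) := exists g, forall x y, f x y = ev g x y.

Lemma ispoly2_ext f f' : (forall x y, f x y = f' x y) -> ispoly2 f -> ispoly2 f'.
Proof. by move=> e [g hg]; exists g => x y; rewrite -e. Qed.
Lemma ispoly2_C c : ispoly2 (fun _ _ => c).
Proof. by exists (c%:P%:P) => x y; rewrite evC hornerC. Qed.
Lemma ispoly2_x : ispoly2 (fun x _ => x).
Proof. by exists ('X%:P) => x y; rewrite evC hornerX. Qed.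
Lemma ispoly2_y : ispoly2 (fun _ y => y).
Proof. by exists 'X => x y; rewrite evX. Qed.
Lemma ispoly2_D f h : ispoly2 f -> ispoly2 h -> ispoly2 (fun x y => f x y + h x y).
Proof. by move=> [g hg] [k hk]; exists (g + k) => x y; rewrite evD hg hk. Qed.
Lemma ispoly2_M f h : ispoly2 f -> ispoly2 h -> ispoly2 (fun x y => f x y * h x y).
Proof. by move=> [g hg] [k hk]; exists (g * k) => x y; rewrite evM hg hk. Qed.
Lemma ispoly2_N f : ispoly2 f -> ispoly2 (fun x y => - f x y).
Proof. by move=> [g hg]; exists (- g) => x y; rewrite evN hg. Qed.
Lemma ispoly2_X f n : ispoly2 f -> ispoly2 (fun x y => f x y ^+ n).
Proof. by move=> [g hg]; exists (g ^+ n) => x y; rewrite evXn hg. Qed.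

Lemma ispoly2_sum (I : Type) (r : seq I) (P : pred I) (F : I -> C -> C -> C) :
  (forall i, ispoly2 (F i)) -> ispoly2 (fun x y => \sum_(i <- r | P i) F i x y).
Proof.
move=> hF; elim: r => [|i r ih].
  by apply: ispoly2_ext (ispoly2_C 0) => x y; rewrite big_nil.
case Pi: (P i).
  by apply: ispoly2_ext (ispoly2_D (hF i) ih) => x y; rewrite big_cons Pi.
by apply: ispoly2_ext ih => x y; rewrite big_cons Pi.
Qed.
Lemma ispoly2_prod (I : Type) (r : seq I) (P : pred I) (F : I -> C -> C -> C) :
  (forall i, ispoly2 (F i)) -> ispoly2 (fun x y => \prod_(i <- r | P i) F i x y).
Proof.
move=> hF; elim: r => [|i r ih].
  by apply: ispoly2_ext (ispoly2_C 1) => x y; rewrite big_nil.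
case Pi: (P i).
  by apply: ispoly2_ext (ispoly2_M (hF i) ih) => x y; rewrite big_cons Pi.
by apply: ispoly2_ext ih => x y; rewrite big_cons Pi.
Qed.

Definition polyfun (f : pt -> C) := forall e : C -> C -> pt,
  (forall i, ispoly2 (fun x y => e x y i)) -> ispoly2 (fun x y => f (e x y)).

Lemma meval_polyfun (p : {mpoly C[6]}) : polyfun (fun v => mpoly.meval v p).
Proof.
move=> e he; apply: ispoly2_ext; first by move=> x y; rewrite mevalE.
apply: ispoly2_sum => m; apply: ispoly2_M; first exact: ispoly2_C.
by apply: ispoly2_prod => i; apply: ispoly2_X.
Qed.

Definition wclosed' (Z : pt -> Prop) : Prop :=
  (forall v m1 m2, m1 != 0 -> m2 != 0 -> Z v -> Z (tact m1 m2 v)) /\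
  exists S : (pt -> C) -> Prop, (forall f, S f -> polyfun f) /\
    forall v, Z v <-> (inU v /\ forall f, S f -> f v = 0).

Lemma wclosed_wclosed' Z : wclosed Z -> wclosed' Z.
Proof.
move=> [_ [ht [S hS]]]; split=> //.
exists (fun f => exists p, S p /\ f = fun v => mpoly.meval v p); split.
  by move=> f [p [_ ->]]; apply: meval_polyfun.
move=> v; rewrite hS; split=> -[hu h]; split=> //.
  by move=> f [p [Sp ->]]; apply: h.
by move=> p Sp; apply: (h (fun v => mpoly.meval v p)); exists p.
Qed.

Lemma ispoly2_mk6 (f0 f1 f2 f3 f4 f5 : C -> C -> C) :
  ispoly2 f0 -> ispoly2 f1 -> ispoly2 f2 -> ispoly2 f3 -> ispoly2 f4 -> ispoly2 f5 ->
  forall i, ispoly2 (fun x y => mk6 (f0 x y) (f1 x y) (f2 x y) (f3 x y) (f4 x y) (f5 x y) i).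
Proof.
move=> h0 h1 h2 h3 h4 h5 [i hi].
case: i hi => [|[|[|[|[|[|i]]]]]] hi //; rewrite /mk6 /=.
Qed.

Definition sw1 (v : pt) : pt := mk6 (t1 v) (s1 v) (w1 v) (s2 v) (t2 v) (w2 v).
Definition sw2 (v : pt) : pt := mk6 (s1 v) (t1 v) (w1 v) (t2 v) (s2 v) (w2 v).

Lemma ispoly2_coord (e : C -> C -> pt) (k : 'I_6) :
  (forall i, ispoly2 (fun x y => e x y i)) -> ispoly2 (fun x y => e x y k).
Proof. by []. Qed.

Section Swap.
Variable sw : pt -> pt.
Hypothesis swpoly : forall e : C -> C -> pt, (forall i, ispoly2 (fun x y => e x y i)) ->
  forall i, ispoly2 (fun x y => sw (e x y) i).
Hypothesis swU : forall v, inU (sw v) <-> inU v.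
Hypothesis swT : forall v m1 m2, sw (tact m1 m2 v) = tact m1 m2 (sw v).
Hypothesis swK : forall v, sw (sw v) = v.

Lemma wclosed'_sw Z : wclosed' Z -> wclosed' (fun v => Z (sw v)).
Proof.
move=> [ht [S [hp hS]]]; split.
  by move=> v m1 m2 h1 h2 Zv; rewrite swT; apply: ht.
exists (fun f => exists h, S h /\ f = fun v => h (sw v)); split.
  move=> f [h [Sh ->]] e he.
  exact: (hp h Sh (fun x y => sw (e x y)) (swpoly he)).
move=> v; rewrite hS swU; split=> -[hu h]; split=> //.
  by move=> f [k [Sk ->]]; apply: h.
by move=> k Sk; apply: (h (fun v => k (sw v))); exists k.
Qed.

Lemma finite_sw Z : finite_points (fun v => Z (sw v)) -> finite_points Z.
Proof.
move=> [l hl]; exists (List.map sw l) => v Zv.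
have [|u [ul [m1 [m2 [h1 [h2 e]]]]]] := hl (sw v); first by rewrite swK.
exists (sw u); split; first exact: List.in_map.
by exists m1, m2; split=> //; split=> //; rewrite -swT -e swK.
Qed.
End Swap.

Lemma sw1poly (e : C -> C -> pt) : (forall i, ispoly2 (fun x y => e x y i)) ->
  forall i, ispoly2 (fun x y => sw1 (e x y) i).
Proof. by move=> he; apply: ispoly2_mk6; apply: he. Qed.
Lemma sw2poly (e : C -> C -> pt) : (forall i, ispoly2 (fun x y => e x y i)) ->
  forall i, ispoly2 (fun x y => sw2 (e x y) i).
Proof. by move=> he; apply: ispoly2_mk6; apply: he. Qed.
Lemma sw1U v : inU (sw1 v) <-> inU v.
Proof. by rewrite /inU /sw1 !mk6E; split=> -[h1 h2]; split=> // -[x [y z]]; apply: h1. Qed.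
Lemma sw2U v : inU (sw2 v) <-> inU v.
Proof. by rewrite /inU /sw2 !mk6E; split=> -[h1 h2]; split=> // -[x [y z]]; apply: h2. Qed.
Lemma sw1T v m1 m2 : sw1 (tact m1 m2 v) = tact m1 m2 (sw1 v).
Proof. by apply: pt_ext. Qed.
Lemma sw2T v m1 m2 : sw2 (tact m1 m2 v) = tact m1 m2 (sw2 v).
Proof. by apply: pt_ext. Qed.
Lemma sw1K v : sw1 (sw1 v) = v.
Proof. by apply: pt_ext. Qed.
Lemma sw2K v : sw2 (sw2 v) = v.
Proof. by apply: pt_ext. Qed.

Lemma prop_pair (s t x y : C) : ~(s = 0 /\ t = 0) -> ~(x = 0 /\ y = 0) -> s * y = t * x ->
  exists m, m != 0 /\ s = m * x /\ t = m * y.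
Proof.
move=> hst hxy e.
have [x0|x0] := eqVneq x 0.
  have y0 : y != 0 by apply/eqP => y0; apply: hxy.
  have s0 : s = 0 by apply/eqP; move: e; rewrite x0 mulr0 => /eqP; rewrite mulf_eq0 (negbTE y0) orbF.
  exists (t / y); split.
    by rewrite mulf_neq0 ?invr_eq0 //; apply/eqP => t0; apply: hst.
  by rewrite x0 s0 mulr0 divfK.
exists (s / x); split.
  rewrite mulf_neq0 ?invr_eq0 //; apply/eqP => s0; apply: hst; split=> //.
  by apply/eqP; move: e; rewrite s0 mul0r => /eqP; rewrite eq_sym mulf_eq0 (negbTE x0) orbF.
split; first by rewrite divfK.
by rewrite mulrAC e mulfK.
Qed.

Lemma finite_of_lists Z (L1 L2 : list (C * C)) :
  (forall p, List.In p L1 -> ~(p.1 = 0 /\ p.2 = 0)) ->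
  (forall p, List.In p L2 -> ~(p.1 = 0 /\ p.2 = 0)) ->
  (forall v, Z v -> inU v /\ w1 v = 0 /\ w2 v = 0 /\
     (exists p, List.In p L1 /\ s1 v * p.2 = t1 v * p.1) /\
     (exists p, List.In p L2 /\ s2 v * p.2 = t2 v * p.1)) ->
  finite_points Z.
Proof.
move=> h1 h2 hZ.
exists (List.flat_map (fun p1 => List.map (fun p2 => mk6 p1.1 p1.2 0 p2.1 p2.2 0) L2) L1).
move=> v /hZ [[hu1 hu2] [e1 [e2 [[p1 [i1 f1]] [p2 [i2 f2]]]]]].
have [m1 [m10 [g1 g1']]] : exists m, m != 0 /\ s1 v = m * p1.1 /\ t1 v = m * p1.2.
  by apply: prop_pair f1; [move=> [a b]; apply: hu1 | apply: h1].
have [m2 [m20 [g2 g2']]] : exists m, m != 0 /\ s2 v = m * p2.1 /\ t2 v = m * p2.2.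
  by apply: prop_pair f2; [move=> [a b]; apply: hu2 | apply: h2].
exists (mk6 p1.1 p1.2 0 p2.1 p2.2 0); split.
  by apply/List.in_flat_map; exists p1; split=> //; apply: List.in_map.
exists m1, m2; split=> //; split=> //.
by apply: pt_ext; rewrite !tactE !mk6E ?mulr0.
Qed.

Definition rlist (P : {poly C}) : seq C := projT1 (dec_factor_theorem P).
Lemma rlistP P z : P != 0 -> root P z -> z \in rlist P.
Proof.
rewrite /rlist; case: (dec_factor_theorem P) => s [q [eP hq]] /=.
rewrite eP mulf_eq0 negb_or => /andP [q0 _].
by rewrite rootM (negbTE (hq q0 z)) root_prod_XsubC.
Qed.

Lemma In_map_mem (T : Type) (f : C -> T) (s : seq C) z : z \in s -> List.In (f z) (map f s).
Proof.
elim: s => [|x s ih] //=; rewrite inE => /orP [/eqP ->|h]; first by left.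
by right; apply: ih.
Qed.

Definition bqz (al be ga : C) : list (C * C) :=
  (1, 0) :: map (fun z => (z, 1)) (rlist (al%:P * 'X^2 + be%:P * 'X + ga%:P)).

Lemma bqz_nz al be ga p : List.In p (bqz al be ga) -> ~(p.1 = 0 /\ p.2 = 0).
Proof.
rewrite /bqz /= => -[<- /= [/eqP]|]; first by rewrite oner_eq0.
elim: (rlist _) => [|x s ih] //= [<- /= [_ /eqP]|]; first by rewrite oner_eq0.
exact: ih.
Qed.

Lemma bqzP al be ga s t : ~(al = 0 /\ be = 0 /\ ga = 0) -> ~(s = 0 /\ t = 0) ->
  al * s ^+ 2 + be * s * t + ga * t ^+ 2 = 0 ->
  exists p, List.In p (bqz al be ga) /\ s * p.2 = t * p.1.
Proof.
move=> habg hst e.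
have [t0|t0] := eqVneq t 0.
  by exists (1, 0); split; [left | rewrite t0 /= mulr0 mul0r].
exists (s / t, 1); split; last by rewrite /= mulr1 mulrC divfK.
right; apply: In_map_mem; apply: rlistP.
  apply/eqP => h; apply: habg.
  have h0 := congr1 (fun p => p.[0]) h; have h1 := congr1 (fun p => p.[1]) h.
  have h2 := congr1 (fun p => p.[-1]) h; move: h0 h1 h2 => /=; rewrite !hornerE /=.
  move=> g0 g1 g2.
  have hg : ga = 0 by rewrite -g0; ring.
  have hb : be = 0.
    have : be * 2 = (al*1*1+be+ga) - (al * -1 * -1 + be * -1 + ga) by ring.
    by rewrite g1 g2 subrr => /eqP; rewrite mulf_eq0 pnatr_eq0 orbF => /eqP.
  split=> //; rewrite -g1 hb hg; ring.
apply/rootP; rewrite !(hornerD, hornerCM, hornerXn, hornerC, hornerX).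
apply: (mulIf (expf_neq0 2 t0)); rewrite mul0r -e; field.
by rewrite t0.
Qed.

Lemma exists_nat_notin (s : seq C) : exists k : nat, k.+1%:R \notin s.
Proof.
case: (classic (exists k : nat, k.+1%:R \notin s)) => // nH.
have H : forall k : nat, k.+1%:R \in s.
  by move=> k; apply/negPn/negP => hk; apply: nH; exists k.
have sub : {subset [seq k.+1%:R | k <- iota 0 (size s).+1] <= s}.
  by move=> x /mapP [k _ ->]; apply: H.
have U : uniq ([seq k.+1%:R | k <- iota 0 (size s).+1] : seq C).
  rewrite map_inj_uniq ?iota_uniq // => i j /eqP; rewrite eqr_nat eqSS => /eqP.
  by [].
by have := uniq_leq_size U sub; rewrite size_map size_iota ltnn.
Qed.

Lemma descent (D : {poly C}) z0 : D.[z0] = 0 -> (D^`()).[z0] != 0 ->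
  forall S r : {poly C}, S ^+ 2 = D * r ^+ 2 -> r = 0.
Proof.
move=> hD hD' S r; have [n] := ubnP (size r); elim: n S r => // n IH S r hn e.
have [->|r0] := eqVneq r 0; first by [].
have Sz : S.[z0] = 0.
  have : S.[z0] ^+ 2 == 0 by rewrite -horner_exp e hornerM hD mul0r.
  by rewrite expf_eq0 /= => /eqP.
have rz : r.[z0] = 0.
  have := congr1 (fun p => p^`().[z0]) e => /=.
  rewrite !expr2 !derivM !hornerE Sz hD !(mulr0, mul0r, addr0, add0r) => /esym/eqP.
  by rewrite !mulf_eq0 (negbTE hD') /= orbb => /eqP.
have /factor_theorem [S1 eS] : root S z0 by apply/rootP.
have /factor_theorem [r1 er] : root r z0 by apply/rootP.
have l0 : ('X - z0%:P) ^+ 2 != 0 :> {poly C} by rewrite expf_neq0 // polyXsubC_eq0.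
have e1 : S1 ^+ 2 = D * r1 ^+ 2.
  apply: (mulIf l0); move: e; rewrite eS er !exprMn => ->; ring.
have r10 : r1 != 0 by apply: contraNneq r0 => h; rewrite er h mul0r.
suff h : r1 = 0 by rewrite er h mul0r.
apply: IH e1; move: hn; rewrite er size_Mmonic ?monicXsubC // size_XsubC addn2 /=.
by [].
Qed.

Lemma cancel_lin (Q : {poly {poly C}}) z (H quo : {poly {poly C}}) :
  map_poly (horner_eval z) Q != 0 -> ('X - z%:P) *: H = quo * Q ->
  exists quo', H = quo' * Q.
Proof.
set l : {poly C} := 'X - z%:P => hQ e.
have Pq : map_poly (horner_eval z) quo = 0.
  have := congr1 (map_poly (horner_eval z)) e.
  rewrite -mul_polyC !rmorphM /= map_polyC /= horner_evalE /l hornerXsubC subrr.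
  rewrite mul0r => /esym/eqP; rewrite mulf_eq0 (negbTE hQ) orbF => /eqP.
  by [].
have rq i : root quo`_i z.
  by apply/rootP; have := congr1 (fun p : {poly C} => p`_i) Pq => /=; rewrite coef_map coef0.
have ul : lead_coef l \in GRing.unit by rewrite lead_coefXsubC unitr1.
set quo' := map_poly (fun p => p %/ l) quo.
have eq : quo = quo' * l%:P.
  apply/polyP => i; rewrite coefMC coef_map_id0 ?div0p //.
  by rewrite (Pdiv.IdomainUnit.divpK ul) // dvdp_XsubCl.
exists quo'; apply: (@mulfI _ l%:P); first by rewrite polyC_eq0 polyXsubC_eq0.
by rewrite mul_polyC e eq; ring.
Qed.

Lemma cancel_gen (Q : {poly {poly C}}) (c0 : {poly C}) (H quo : {poly {poly C}}) :
  c0 != 0 -> (forall z, root c0 z -> map_poly (horner_eval z) Q != 0) ->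
  c0 *: H = quo * Q -> exists quo', H = quo' * Q.
Proof.
have [n] := ubnP (size c0); elim: n c0 H quo => // n IH c0 H quo hn c00 hr e.
have [s1|s1] := eqVneq (size c0) 1.
  have [k ek] : exists k, c0 = k%:P.
    by exists c0`_0; apply: size1_polyC; rewrite s1.
  have k0 : k != 0 by move: c00; rewrite ek polyC_eq0.
  exists ((k^-1)%:P *: quo); rewrite -scalerAl -e scalerA ek.
  by rewrite -rmorphM /= mulVf // scale1r.
have [z rz] : exists z, root c0 z by apply/closed_rootP.
have /factor_theorem [c1 ec] := rz.
have c10 : c1 != 0 by apply: contraNneq c00 => h; rewrite ec h mul0r.
have e' : ('X - z%:P) *: (c1 *: H) = quo * Q by rewrite scalerA mulrC -ec.
have [quo1 e1] := cancel_lin (hr z rz) e'.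
apply: (IH c1 H quo1) => //.
  move: hn; rewrite ec size_Mmonic ?monicXsubC // size_XsubC addn2 /=.
  by [].
by move=> y ry; apply: hr; rewrite ec rootM ry.
Qed.

Lemma four_neq0 : (4 : C) != 0. Proof. by rewrite pnatr_eq0. Qed.
Lemma two_neq0 : (2 : C) != 0. Proof. by rewrite pnatr_eq0. Qed.

Definition Hyp (a b c : C) :=
  [/\ b ^+ 2 - c ^+ 2 != 0, a ^+ 2 - b ^+ 2 != 0, a ^+ 2 - c ^+ 2 != 0,
      ~ (a = 0 /\ b = 0) & ~ (a = 0 /\ c = 0)].

Lemma HypN a b c : Hyp a b c -> Hyp a b (- c).
Proof.
case=> h1 h2 h3 h4 h5; split; rewrite ?sqrrN //.
by move=> [x y]; apply: h5; split=> //; apply/eqP; rewrite -oppr_eq0 y.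
Qed.

Section Core.
Variables a b c : C.
Hypothesis H : Hyp a b c.

Definition Af (x y : C) := (b + c) / 4 * x ^+ 2 + (b - c) / 4 * y ^+ 2.
Definition Df (x y : C) := (b + c) / 4 * y ^+ 2 + (b - c) / 4 * x ^+ 2.

Lemma bpc : b + c != 0.
Proof. by case: H => h _ _ _ _; apply: contraNneq h => e; rewrite subr_sqr e mulr0. Qed.
Lemma bmc : b - c != 0.
Proof. by case: H => h _ _ _ _; apply: contraNneq h => e; rewrite subr_sqr e mul0r. Qed.

Lemma ABD_nz x y : ~ (x = 0 /\ y = 0) -> ~ (Af x y = 0 /\ a * x * y = 0 /\ Df x y = 0).
Proof.
move=> hxy [hA [hB hD]].
have x0 : x != 0.
  apply/eqP => x0; apply: hxy; split=> //; apply/eqP.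
  move: hA; rewrite /Af x0 expr0n /= mulr0 add0r => /eqP.
  by rewrite !mulf_eq0 invr_eq0 (negbTE four_neq0) (negbTE bmc) /= orbb.
have y0 : y != 0.
  apply/eqP => y0; apply: hxy; split=> //; apply/eqP.
  move: hA; rewrite /Af y0 expr0n /= mulr0 addr0 => /eqP.
  by rewrite !mulf_eq0 invr_eq0 (negbTE four_neq0) (negbTE bpc) /= orbb.
have a0 : a = 0.
  by apply/eqP; move: hB => /eqP; rewrite !mulf_eq0 (negbTE x0) (negbTE y0) !orbF.
case: H => _ _ _ nab nac.
have b0 : b != 0 by apply/eqP => b0; apply: nab.
have c0 : c != 0 by apply/eqP => c0; apply: nac.
have e1 : b * (x ^+ 2 + y ^+ 2) = 0.
  have -> : b * (x ^+ 2 + y ^+ 2) = 2 * (Af x y + Df x y) by rewrite /Af /Df; field.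
  by rewrite hA hD addr0 mulr0.
have e2 : c * (x ^+ 2 - y ^+ 2) = 0.
  have -> : c * (x ^+ 2 - y ^+ 2) = 2 * (Af x y - Df x y) by rewrite /Af /Df; field.
  by rewrite hA hD subr0 mulr0.
move: e1 e2 => /eqP; rewrite mulf_eq0 (negbTE b0) /= => /eqP e1 /eqP.
rewrite mulf_eq0 (negbTE c0) /= => /eqP e2.
have : x ^+ 2 * 2 = 0.
  have -> : x ^+ 2 * 2 = (x ^+ 2 + y ^+ 2) + (x ^+ 2 - y ^+ 2) by ring.
  by rewrite e1 e2 addr0.
by move/eqP; rewrite mulf_eq0 (negbTE two_neq0) orbF expf_eq0 (negbTE x0) andbF.
Qed.

Definition Ap : {poly C} := ((b + c) / 4)%:P * 'X^2 + ((b - c) / 4)%:P.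
Definition Bp : {poly C} := a%:P * 'X.
Definition Dp : {poly C} := ((b + c) / 4)%:P + ((b - c) / 4)%:P * 'X^2.
Definition Qp : {poly {poly C}} := Ap%:P * 'X^2 + (Bp%:P * 'X + Dp%:P).

Lemma Ap_ev z : Ap.[z] = Af z 1.
Proof. by rewrite /Ap /Af !(hornerD, hornerCM, hornerXn, hornerC); ring. Qed.
Lemma Bp_ev z : Bp.[z] = a * z * 1.
Proof. by rewrite /Bp !(hornerD, hornerCM, hornerX, hornerC); ring. Qed.
Lemma Dp_ev z : Dp.[z] = Df z 1.
Proof. by rewrite /Dp /Df !(hornerD, hornerCM, hornerXn, hornerC); ring. Qed.

Lemma evQ z1 z2 : ev Qp z1 z2 = Ap.[z1] * z2 ^+ 2 + Bp.[z1] * z2 + Dp.[z1].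
Proof. by rewrite /Qp !(evD, evM, evC, evXn, evX); ring. Qed.

Lemma Qf_eq z1 z2 : qf a b c (mk6 z1 1 0 z2 1 0) = ev Qp z1 z2.
Proof. by rewrite evQ Ap_ev Bp_ev Dp_ev /qf !mk6E /Af /Df; ring. Qed.

Lemma Ap_nz : Ap != 0.
Proof.
apply/eqP => h; have := congr1 (horner^~ 0) h; rewrite Ap_ev /Af horner0 /=.
rewrite expr0n /= mulr0 add0r expr1n mulr1 => /eqP.
by rewrite mulf_eq0 invr_eq0 (negbTE four_neq0) (negbTE bmc).
Qed.

Lemma sizeQ_aux : (size ((Bp%:P * 'X + Dp%:P)%R : {poly {poly C}}) < 3)%N.
Proof.
rewrite (leq_ltn_trans (size_add _ _)) // gtn_max.
rewrite (leq_ltn_trans (size_polyC_leq1 _)) // andbT.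
by rewrite mul_polyC (leq_ltn_trans (size_scale_leq _ _)) // size_polyX.
Qed.

Lemma sizeQ1 : size (Ap%:P * 'X^2 : {poly {poly C}}) = 3.
Proof. by rewrite mul_polyC size_scale ?size_polyXn ?Ap_nz. Qed.

Lemma sizeQ : size Qp = 3.
Proof. by rewrite /Qp size_addl sizeQ1 // sizeQ_aux. Qed.

Lemma lcQ : lead_coef Qp = Ap.
Proof.
rewrite /Qp lead_coefDl; first by rewrite mul_polyC lead_coefZ lead_coefXn mulr1.
by rewrite sizeQ1 sizeQ_aux.
Qed.

Lemma Qp_nz : Qp != 0.
Proof. by rewrite -size_poly_eq0 sizeQ. Qed.

Lemma PhiQ z : root Ap z -> map_poly (horner_eval z) Qp != 0.
Proof.
move/rootP => hz; apply/eqP => h.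
have e y : ev Qp z y = 0 by rewrite /ev h horner0.
have e0 := e 0; have e1 := e 1; rewrite !evQ hz in e0 e1.
move: e0; rewrite expr0n /= !mulr0 !add0r => hD.
move: e1; rewrite hD !mulr1 mul0r add0r addr0 => hB.
apply: (@ABD_nz z 1); first by case=> _ /eqP; rewrite oner_eq0.
by rewrite -Ap_ev -Dp_ev -Bp_ev.
Qed.

Definition Dl : {poly C} := Bp ^+ 2 - Ap * Dp *+ 4.

Lemma Dl_ev z : Dl.[z] = - ((b^+2 - c^+2) * z^+4 + 2 * (b^+2 + c^+2 - 2 * a^+2) * z^+2 + (b^+2 - c^+2)) / 4.
Proof.
rewrite /Dl /Ap /Bp /Dp !hornerE /=.
by field.
Qed.

Lemma Dl'_ev z : (Dl^`()).[z] = - (z * ((b^+2 - c^+2) * z^+2 + (b^+2 + c^+2 - 2 * a^+2))).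
Proof.
rewrite /Dl /Ap /Bp /Dp !derivE !hornerE /=.
by field.
Qed.

Lemma Dl_root : exists z0, Dl.[z0] = 0 /\ (Dl^`()).[z0] != 0.
Proof.
case: H => hbc hab hac _ _.
set la := b^+2 - c^+2; set ka := b^+2 + c^+2 - 2 * a^+2.
have kl : ka^+2 - la^+2 != 0.
  have -> : ka^+2 - la^+2 = 4 * ((a^+2 - c^+2) * (a^+2 - b^+2)) by rewrite /ka /la; ring.
  by rewrite !mulf_neq0 ?four_neq0.
set s := sqrtC (ka^+2 - la^+2).
have hs : s ^+ 2 = ka^+2 - la^+2 by rewrite sqrtCK.
have s0 : s != 0 by apply: contraNneq kl => h; rewrite -hs h expr0n.
set om := (s - ka) / la.
set z0 := sqrtC om.
have hz : z0 ^+ 2 = om by rewrite sqrtCK.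
have e1 : la * om ^+ 2 + 2 * ka * om + la = 0.
  have -> : la * om ^+ 2 + 2 * ka * om + la = (s ^+ 2 - (ka ^+ 2 - la ^+ 2)) / la.
    by rewrite /om; field.
  by rewrite hs subrr mul0r.
have e2 : la * om + ka = s by rewrite /om; field.
exists z0; split.
  rewrite Dl_ev -/la -/ka (_ : z0 ^+ 4 = om ^+ 2); last by rewrite -hz -exprM.
  by rewrite hz e1 oppr0 mul0r.
rewrite Dl'_ev -/la -/ka hz e2 oppr_eq0 mulf_neq0 //.
apply/eqP => z00; move: e2; rewrite -hz z00 expr0n /= mulr0 add0r => ka_s.
have : la ^+ 2 = ka ^+ 2 - s ^+ 2 by rewrite hs; ring.
by rewrite ka_s subrr => /eqP; rewrite expf_eq0 /= (negbTE hbc).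
Qed.

Lemma core (g : {poly {poly C}}) :
  (forall P : {poly C}, P != 0 ->
     exists z1 z2, ev Qp z1 z2 = 0 /\ ev g z1 z2 = 0 /\ P.[z1] != 0) ->
  forall z1 z2, ev Qp z1 z2 = 0 -> ev g z1 z2 = 0.
Proof.
move=> hyp.
have de := Pdiv.Idomain.divp_eq g Qp.
have szr := Pdiv.Idomain.ltn_modpN0 g Qp_nz.
rewrite sizeQ in szr; rewrite lcQ in de.
move: de szr; generalize (Pdiv.Idomain.scalp g Qp) (Pdiv.Idomain.divp g Qp) (Pdiv.Idomain.modp g Qp).
move=> k quo rem de szr.
set r0 := rem`_0; set r1 := rem`_1.
have erem : rem = r0%:P + r1%:P * 'X.
  apply/polyP => i; rewrite coefD coefC coefCM coefX.
  case: i => [|[|i]] /=; rewrite ?mulr0 ?mulr1 ?addr0 ?add0r //.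
  by rewrite nth_default // -ltnS (leq_trans szr).
have key z1 z2 : ev Qp z1 z2 = 0 -> ev g z1 z2 = 0 -> r0.[z1] + r1.[z1] * z2 = 0.
  move=> hQ hg; have := congr1 (fun p => ev p z1 z2) de => /=.
  rewrite -mul_polyC evM evD evM evC hg hQ !mulr0 add0r erem.
  by rewrite !(evD, evM, evC, evX) => <-.
set R := Ap * r0 ^+ 2 - Bp * r0 * r1 + Dp * r1 ^+ 2.
have R0 : R = 0.
  apply/eqP; apply/negP => /negP /hyp [z1 [z2 [hQ [hg hR]]]].
  have e := key z1 z2 hQ hg.
  move: hR; rewrite evQ in hQ.
  have -> : R.[z1] = r1.[z1] ^+ 2 * (Ap.[z1] * z2 ^+ 2 + Bp.[z1] * z2 + Dp.[z1])
       + (r0.[z1] + r1.[z1] * z2) * (Ap.[z1] * (r0.[z1] - r1.[z1] * z2) - Bp.[z1] * r1.[z1]).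
    by rewrite /R !(hornerD, hornerN, hornerM, horner_exp); ring.
  by rewrite hQ e !mulr0 mul0r addr0 eqxx.
have SQ : (Ap * r0 *+ 2 - Bp * r1) ^+ 2 = Dl * r1 ^+ 2.
  have -> : (Ap * r0 *+ 2 - Bp * r1) ^+ 2 = Dl * r1 ^+ 2 + (Ap * R) *+ 4.
    by rewrite /Dl /R; ring.
  by rewrite R0 mulr0 mul0rn addr0.
have [z0 [hz0 hz0']] := Dl_root.
have r10 : r1 = 0 := descent hz0 hz0' SQ.
have r00 : r0 = 0.
  move: R0; rewrite /R r10 !(mulr0, expr0n) /= subr0 addr0 => /eqP.
  by rewrite mulf_eq0 (negbTE Ap_nz) /= expf_eq0 /= => /eqP.
have rem0 : rem = 0 by rewrite erem r00 r10 mul0r addr0.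
move: de; rewrite rem0 addr0 => de.
have [quo' eq'] : exists quo', g = quo' * Qp.
  apply: (cancel_gen _ _ de); first by rewrite expf_neq0 // Ap_nz.
  move=> z; rewrite rootE horner_exp expf_eq0 => /andP [_ hz].
  by apply: PhiQ; rewrite rootE.
by move=> z1 z2 hQ; rewrite eq' evM hQ mulr0.
Qed.
End Core.

Lemma qf_split a b c v : qf a b c v =
  Af b c (s1 v) (t1 v) * s2 v ^+ 2 + a * s1 v * t1 v * s2 v * t2 v + Df b c (s1 v) (t1 v) * t2 v ^+ 2.
Proof. by rewrite /qf /Af /Df; ring. Qed.

Lemma tact_tact m1 m2 n1 n2 v : tact m1 m2 (tact n1 n2 v) = tact (m1 * n1) (m2 * n2) v.
Proof. by apply: pt_ext; rewrite !tactE; ring. Qed.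

Lemma qf_tact a b c m1 m2 v : qf a b c (tact m1 m2 v) = m1 ^+ 2 * m2 ^+ 2 * qf a b c v.
Proof. by rewrite /qf !tactE; ring. Qed.

Lemma chart_pt v : w1 v = 0 -> w2 v = 0 -> t1 v != 0 -> t2 v != 0 ->
  v = tact (t1 v) (t2 v) (mk6 (s1 v / t1 v) 1 0 (s2 v / t2 v) 1 0).
Proof.
move=> h1 h2 h3 h4; apply: pt_ext; rewrite !tactE !mk6E ?mulr1 ?mulr0 ?divfK //.
by rewrite mulrC divfK.
by rewrite mulrC divfK.
Qed.

Section Chart.
Variables a b c : C.
Hypothesis H : Hyp a b c.

Lemma HD (Z : pt -> Prop) : (forall v, Z v -> F1capF2 a b c v) -> ~ finite_points Z ->
  forall P : {poly C}, P != 0 ->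
  exists u, Z u /\ t1 u != 0 /\ t2 u != 0 /\ P.[s1 u / t1 u] != 0.
Proof.
move=> hZ nf P P0; apply: NNPP => nH; apply: nf.
set L1 := (1, 0) :: List.app (map (fun z => (z, 1)) (rlist P)) (bqz ((b + c) / 4) 0 ((b - c) / 4)).
set L2 := List.flat_map (fun p : C * C => bqz (Af b c p.1 p.2) (a * p.1 * p.2) (Df b c p.1 p.2)) L1.
have nz1 : forall p, List.In p L1 -> ~ (p.1 = 0 /\ p.2 = 0).
  move=> p; rewrite /L1 /= => -[<- /= [/eqP]|]; first by rewrite oner_eq0.
  move=> h; case: (List.in_app_or _ _ _ h) => {h}; last exact: bqz_nz.
  elim: (rlist P) => [|x s ih] //= [<- /= [_ /eqP]|]; first by rewrite oner_eq0.
  exact: ih.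
apply: (@finite_of_lists _ L1 L2 nz1).
  move=> p h; case: (proj1 (List.in_flat_map _ _ _) h) => p1 [_ h1]; exact: bqz_nz h1.
move=> u Zu; have [hU [hq [hw1 hw2]]] := hZ u Zu.
have [hU1 hU2] := hU.
have st1 : ~ (s1 u = 0 /\ t1 u = 0) by move=> [x y]; apply: hU1.
have st2 : ~ (s2 u = 0 /\ t2 u = 0) by move=> [x y]; apply: hU2.
split=> //; split=> //; split=> //.
have [p1 [ip1 hp1]] : exists p, List.In p L1 /\ s1 u * p.2 = t1 u * p.1.
  have [t10|t10] := eqVneq (t1 u) 0.
    by exists (1, 0); split; [left | rewrite t10 /= mulr0 mul0r].
  have [t20|t20] := eqVneq (t2 u) 0.
    have s20 : s2 u != 0 by apply/eqP => s20; apply: st2.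
    have h1 : ~ ((b + c) / 4 = 0 /\ (0:C) = 0 /\ (b - c) / 4 = 0).
      move=> [h _]; move/eqP: h; rewrite mulf_eq0 invr_eq0 (negbTE four_neq0) orbF => /eqP h.
      by move: (bpc H); rewrite h eqxx.
    have h3 : (b + c) / 4 * s1 u ^+ 2 + 0 * s1 u * t1 u + (b - c) / 4 * t1 u ^+ 2 = 0.
      move: hq; rewrite qf_split t20 !mulr0 expr0n /= mulr0 !addr0 => /eqP.
      rewrite mulf_eq0 expf_eq0 (negbTE s20) andbF orbF /Af => /eqP h; by rewrite !mul0r addr0.
    have [p [ip hp]] := bqzP h1 st1 h3.
    by exists p; split=> //; right; apply: List.in_or_app; right.
  have Pz : P.[s1 u / t1 u] = 0.
    by apply/eqP; apply: contraT => hP; case: nH; exists u.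
  exists (s1 u / t1 u, 1); split; last by rewrite /= mulr1 mulrC divfK.
  right; apply: List.in_or_app; left; apply: In_map_mem; apply: rlistP => //.
  exact/rootP.
split; first by exists p1.
have [m [m0 [e1 e2]]] := prop_pair st1 (nz1 p1 ip1) hp1.
have h1 : ~ (Af b c p1.1 p1.2 = 0 /\ a * p1.1 * p1.2 = 0 /\ Df b c p1.1 p1.2 = 0).
  by apply: ABD_nz => //; apply: nz1.
have h3 : Af b c p1.1 p1.2 * s2 u ^+ 2 + a * p1.1 * p1.2 * s2 u * t2 u + Df b c p1.1 p1.2 * t2 u ^+ 2 = 0.
  apply: (mulfI (expf_neq0 2 m0)); rewrite mulr0 -hq qf_split e1 e2 /Af /Df; ring.
have [p2 [ip2 hp2]] := bqzP h1 st2 h3.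
exists p2; split=> //; apply: (proj2 (List.in_flat_map _ _ _)); exists p1; split=> //.
Qed.

Lemma chartM (Z : pt -> Prop) : wclosed' Z -> (forall v, Z v -> F1capF2 a b c v) ->
  ~ finite_points Z ->
  forall v, F1capF2 a b c v -> t1 v != 0 -> t2 v != 0 -> Z v.
Proof.
move=> [ht [S [hp hS]]] hZ nf v Fv t10 t20.
apply/hS; split; first by case: Fv.
move=> f Sf.
set m1 := t1 v; set m2 := t2 v.
set e := fun x y => tact m1 m2 (mk6 x 1 0 y 1 0).
have he : forall i, ispoly2 (fun x y => e x y i).
  apply: ispoly2_mk6; apply: ispoly2_M; try exact: ispoly2_C; try exact: ispoly2_x;
    exact: ispoly2_y.
have [g hg] := hp f Sf e he.
have key : forall z1 z2, ev (Qp a b c) z1 z2 = 0 -> ev g z1 z2 = 0.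
  apply: core => // P P0.
  have [u [Zu [tu1 [tu2 hP]]]] := HD hZ nf P0.
  have [hU [hq [hw1 hw2]]] := hZ u Zu.
  have eu := chart_pt hw1 hw2 tu1 tu2.
  exists (s1 u / t1 u), (s2 u / t2 u); split; last split=> //.
    rewrite -Qf_eq; apply: (mulfI (mulf_neq0 (expf_neq0 2 tu1) (expf_neq0 2 tu2))).
    by rewrite mulr0 -qf_tact -eu.
  rewrite -hg; apply/(proj2 (proj1 (hS _) _)) => //.
  have := congr1 (tact (m1 / t1 u) (m2 / t2 u)) eu; rewrite tact_tact !divfK // => h; rewrite /e -h.
  by apply: ht => //; apply: mulf_neq0; rewrite ?invr_eq0.
have [hU [hq [hw1 hw2]]] := Fv.
have ev' := chart_pt hw1 hw2 t10 t20.
rewrite {1}ev' -/m1 -/m2 -/(e _ _) hg; apply: key.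
rewrite -Qf_eq; apply: (mulfI (mulf_neq0 (expf_neq0 2 t10) (expf_neq0 2 t20))).
by rewrite mulr0 -qf_tact -ev'.
Qed.
End Chart.

Lemma F_sw1 a b c u : F1capF2 a b c (sw1 u) <-> F1capF2 a b (- c) u.
Proof.
rewrite /F1capF2 sw1U (_ : qf a b c (sw1 u) = qf a b (- c) u); first by [].
by rewrite /qf /sw1 !mk6E; ring.
Qed.
Lemma F_sw2 a b c u : F1capF2 a b c (sw2 u) <-> F1capF2 a b (- c) u.
Proof.
rewrite /F1capF2 sw2U (_ : qf a b c (sw2 u) = qf a b (- c) u); first by [].
by rewrite /qf /sw2 !mk6E; ring.
Qed.

Lemma nfin_sw1 Z : ~ finite_points Z -> ~ finite_points (fun v => Z (sw1 v)).
Proof. by move=> nf /(finite_sw sw1T sw1K). Qed.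
Lemma nfin_sw2 Z : ~ finite_points Z -> ~ finite_points (fun v => Z (sw2 v)).
Proof. by move=> nf /(finite_sw sw2T sw2K). Qed.
Lemma wc_sw1 Z : wclosed' Z -> wclosed' (fun v => Z (sw1 v)).
Proof. exact: (wclosed'_sw sw1poly sw1U sw1T). Qed.
Lemma wc_sw2 Z : wclosed' Z -> wclosed' (fun v => Z (sw2 v)).
Proof. exact: (wclosed'_sw sw2poly sw2U sw2T). Qed.

Lemma curveF a b c : Hyp a b c -> forall Z, wclosed' Z ->
  (forall v, Z v -> F1capF2 a b c v) -> ~ finite_points Z ->
  forall v, F1capF2 a b c v -> Z v.
Proof.
move=> H Z wc hZ nf v Fv.
have [[hU1 hU2] [_ [hw1 hw2]]] := Fv.
have st1 : s1 v != 0 \/ t1 v != 0.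
  case: (eqVneq (s1 v) 0) => [x|]; last by left.
  by case: (eqVneq (t1 v) 0) => [y|]; [case: hU1 | right].
have st2 : s2 v != 0 \/ t2 v != 0.
  case: (eqVneq (s2 v) 0) => [x|]; last by left.
  by case: (eqVneq (t2 v) 0) => [y|]; [case: hU2 | right].
have [t10|t10] := eqVneq (t1 v) 0; have [t20|t20] := eqVneq (t2 v) 0.
- have s10 : s1 v != 0 by case: st1 => //; rewrite t10 eqxx.
  have s20 : s2 v != 0 by case: st2 => //; rewrite t20 eqxx.
  have hZ' : forall u, Z (sw1 (sw2 u)) -> F1capF2 a b c u.
    by move=> u /hZ /F_sw1 /F_sw2; rewrite opprK.
  have Fv' : F1capF2 a b c (sw2 (sw1 v)).
    by apply/F_sw2/F_sw1; rewrite opprK.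
  have := @chartM a b c H (fun u => Z (sw1 (sw2 u))) (wc_sw2 (wc_sw1 wc)) hZ'
     (nfin_sw2 (nfin_sw1 nf)) (sw2 (sw1 v)) Fv'.
  by rewrite /= sw2K sw1K; apply.
- have s10 : s1 v != 0 by case: st1 => //; rewrite t10 eqxx.
  have hZ' : forall u, Z (sw1 u) -> F1capF2 a b (- c) u by move=> u /hZ /F_sw1.
  have Fv' : F1capF2 a b (- c) (sw1 v) by apply/F_sw1; rewrite opprK.
  have := @chartM a b (- c) (HypN H) (fun u => Z (sw1 u)) (wc_sw1 wc) hZ'
     (nfin_sw1 nf) (sw1 v) Fv'.
  by rewrite /= sw1K; apply.
- have s20 : s2 v != 0 by case: st2 => //; rewrite t20 eqxx.
  have hZ' : forall u, Z (sw2 u) -> F1capF2 a b (- c) u by move=> u /hZ /F_sw2.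
  have Fv' : F1capF2 a b (- c) (sw2 v) by apply/F_sw2; rewrite opprK.
  have := @chartM a b (- c) (HypN H) (fun u => Z (sw2 u)) (wc_sw2 wc) hZ'
     (nfin_sw2 nf) (sw2 v) Fv'.
  by rewrite /= sw2K; apply.
- exact: (chartM H wc hZ nf Fv).
Qed.

Notation X0 := ('X_(@Ordinal 6 0 isT) : {mpoly C[6]}).
Notation X1 := ('X_(@Ordinal 6 1 isT) : {mpoly C[6]}).
Notation X2 := ('X_(@Ordinal 6 2 isT) : {mpoly C[6]}).
Notation X3 := ('X_(@Ordinal 6 3 isT) : {mpoly C[6]}).
Notation X4 := ('X_(@Ordinal 6 4 isT) : {mpoly C[6]}).
Notation X5 := ('X_(@Ordinal 6 5 isT) : {mpoly C[6]}).

Definition qm (a b c : C) : {mpoly C[6]} :=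
  a%:MP * X0 * X1 * X3 * X4
  + ((b + c) / 4)%:MP * (X0 * X0 * X3 * X3 + X1 * X1 * X4 * X4)
  + ((b - c) / 4)%:MP * (X0 * X0 * X4 * X4 + X1 * X1 * X3 * X3).

Lemma meval_qm a b c v : mpoly.meval v (qm a b c) = qf a b c v.
Proof.
rewrite /qm !(mevalD, mevalM, mevalC, mevalXU) /qf /s1 /t1 /s2 /t2; ring.
Qed.

Lemma inU_tact m1 m2 v : m1 != 0 -> m2 != 0 -> inU (tact m1 m2 v) <-> inU v.
Proof.
move=> h1 h2; rewrite /inU !tactE.
have E (m x : C) : m != 0 -> m * x = 0 -> x = 0.
  by move=> hm /eqP; rewrite mulf_eq0 (negbTE hm) => /eqP.
have h1' : m1 ^+ 2 != 0 by rewrite expf_neq0.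
have h2' : m2 ^+ 2 != 0 by rewrite expf_neq0.
split=> -[g1 g2]; split.
- by move=> [x [y z]]; apply: g1; rewrite x y z !mulr0.
- by move=> [x [y z]]; apply: g2; rewrite x y z !mulr0.
- by move=> [x [y z]]; apply: g1; rewrite (E _ _ h1 x) (E _ _ h1 y) (E _ _ h1' z).
- by move=> [x [y z]]; apply: g2; rewrite (E _ _ h2 x) (E _ _ h2 y) (E _ _ h2' z).
Qed.

Lemma F_wclosed a b c : wclosed (F1capF2 a b c).
Proof.
split; first by move=> v [].
split.
  move=> v m1 m2 h1 h2 [hu [hq [hw1 hw2]]]; split; first by apply/inU_tact.
  by rewrite qf_tact hq !tactE hw1 hw2 !mulr0.
exists (fun p => p = qm a b c \/ p = X2 \/ p = X5) => v; split.
  move=> [hu [hq [hw1 hw2]]]; split=> // p [->|[->|->]]; rewrite ?meval_qm ?mevalXU //.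
move=> [hu h]; split=> //; split; first by rewrite -meval_qm; apply: h; left.
by split; [ rewrite /w1 -(mevalXU v); apply: h; right; left
          | rewrite /w2 -(mevalXU v); apply: h; right; right].
Qed.

Lemma In_map_mem2 (l : list pt) (f : pt -> C) u : List.In u l -> f u \in map f l.
Proof.
elim: l => [[]|x l ih] /= [->|h]; rewrite inE; first by rewrite eqxx.
by rewrite ih ?orbT.
Qed.

Lemma F_infinite a b c : Hyp a b c -> ~ finite_points (F1capF2 a b c).
Proof.
move=> H [l hl].
have [k hk] := exists_nat_notin (map (fun u => s1 u / t1 u) l ++ rlist (Ap b c)).
set z : C := k.+1%:R in hk.
rewrite mem_cat negb_or in hk; case/andP: hk => hk1 hk2.
have Az : (Ap b c).[z] != 0.
  by apply: contraNneq hk2 => h; apply: rlistP; [exact: (Ap_nz H) | exact/rootP].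
set A := (Ap b c).[z]; set B := (Bp a).[z]; set D := (Dp b c).[z].
set y := (- B + sqrtC (B ^+ 2 - 4 * A * D)) / (2 * A).
have hy : A * y ^+ 2 + B * y + D = 0.
  have hs := sqrtCK (B ^+ 2 - 4 * A * D).
  rewrite /y; move: hs; set r := sqrtC _ => hs.
  have -> : A * ((- B + r) / (2 * A)) ^+ 2 + B * ((- B + r) / (2 * A)) + D
           = (r ^+ 2 - (B ^+ 2 - 4 * A * D)) / (4 * A) by field.
  by rewrite hs subrr mul0r.
have Fv : F1capF2 a b c (mk6 z 1 0 y 1 0).
  split; first by split; rewrite !mk6E => -[_ [/eqP]]; rewrite oner_eq0.
  by split=> //; rewrite Qf_eq evQ.
have [u [iu [m1 [m2 [_ [_ e]]]]]] := hl _ Fv.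
have e1 : 1 = m1 * t1 u by have := congr1 t1 e; rewrite tactE.
have e0 : z = m1 * s1 u by have := congr1 s1 e; rewrite tactE.
have tu : t1 u != 0 by apply: contra_eq_neq e1 => ->; rewrite mulr0 oner_neq0.
move: hk1; rewrite (_ : z = s1 u / t1 u) ?In_map_mem2 //.
have hm : m1 = (t1 u)^-1 by apply: (mulIf tu); rewrite mulVf // e1.
by rewrite e0 hm mulrC.
Qed.

Lemma finite_union (Z Z1 Z2 : pt -> Prop) : (forall v, Z v -> Z1 v \/ Z2 v) ->
  finite_points Z1 -> finite_points Z2 -> finite_points Z.
Proof.
move=> h [l1 h1] [l2 h2]; exists (List.app l1 l2) => v /h [/h1|/h2] [u [iu su]];
  exists u; split=> //; apply: List.in_or_app; [left|right]; exact: iu.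
Qed.

Lemma F_proper a b c : Hyp a b c -> forall Z', wclosed Z' -> Defs.subsetP Z' (F1capF2 a b c) ->
  ~ Defs.subsetP (F1capF2 a b c) Z' -> finite_points Z'.
Proof.
move=> H Z' wc sub nsub; apply: NNPP => nf; apply: nsub => v.
exact: (curveF H (wclosed_wclosed' wc) sub nf).
Qed.

Lemma F_curve a b c : Hyp a b c -> irreducible_curve (F1capF2 a b c).
Proof.
move=> H; have nf := F_infinite H.
split; last split=> //; last exact: F_proper.
split; first exact: F_wclosed.
split.
  apply: NNPP => ne; apply: nf; exists nil => v Fv; case: ne; by exists v.
move=> Z1 Z2 w1 w2 e.
case: (classic (Defs.subsetP (F1capF2 a b c) Z1)) => [|n1]; first by left.
case: (classic (Defs.subsetP (F1capF2 a b c) Z2)) => [|n2]; first by right.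
have f1 := F_proper H w1 (fun v h => proj2 (e v) (or_introl h)) n1.
have f2 := F_proper H w2 (fun v h => proj2 (e v) (or_intror h)) n2.
by case: nf; apply: (finite_union (fun v => proj1 (e v)) f1 f2).
Qed.

Lemma F_Ginv a b c : G_invariant (F1capF2 a b c).
Proof.
have gen : forall g : pt -> pt,
  (forall v, w1 (g v) = 0 <-> w1 v = 0) -> (forall v, w2 (g v) = 0 <-> w2 v = 0) ->
  (forall v, w1 v = 0 -> w2 v = 0 -> (inU (g v) <-> inU v)) ->
  (forall v, w1 v = 0 -> w2 v = 0 -> qf a b c (g v) = qf a b c v) ->
  forall v, F1capF2 a b c (g v) <-> F1capF2 a b c v.
  move=> g e1 e2 eU eq v; split.
    move=> [hU [hq [h1 h2]]]; move/e1: h1 => h1; move/e2: h2 => h2.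
    by split; [apply/(eU v h1 h2) | rewrite -eq].
  by move=> [hU [hq [h1 h2]]]; split; [apply/(eU v h1 h2) | rewrite eq // e1 e2].
have E x : (- x = 0 :> C) = (x = 0).
  by apply: propositional_extensionality; split=> [/eqP|->]; rewrite ?oppr0 // oppr_eq0 => /eqP.
split; [|split; [|split]].
- apply: gen => // v.
  + by rewrite /inU /tau1 !mk6E => h1 h2; rewrite h1 h2; intuition.
  + by move=> _ _; rewrite /qf /tau1 !mk6E; ring.
- apply: gen => // v.
  + by rewrite /inU /tau2 !mk6E => h1 h2; intuition.
  + by move=> _ _; rewrite /qf /tau2 !mk6E; ring.
- apply: gen => // v.
  + by rewrite /inU /tau3 !mk6E !E => h1 h2; intuition.
  + by move=> _ _; rewrite /qf /tau3 !mk6E; ring.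
- move=> l v l0; apply: gen => {v} v.
  + rewrite /sigma mk6E; split=> [/eqP|->]; last by rewrite mulr0.
    by rewrite mulf_eq0 (negbTE l0) => /eqP.
  + rewrite /sigma mk6E; split=> [/eqP|->]; last by rewrite mulr0.
    by rewrite mulf_eq0 invr_eq0 (negbTE l0) => /eqP.
  + by rewrite /inU /sigma !mk6E => h1 h2; rewrite h1 h2 !mulr0; intuition.
  + by move=> _ _; rewrite /qf /sigma !mk6E.
Qed.

Lemma same_scale (x y x' y' m n : C) : ~ (x = 0 /\ y = 0) ->
  x = m * x' -> y = m * y' -> x = n * x' -> y = n * y' -> m = n.
Proof.
move=> hxy e1 e2 e3 e4.
have [x0|x0] := eqVneq x 0.
  have y0 : y != 0 by apply/eqP => y0; apply: hxy.
  have y'0 : y' != 0 by apply: contraNneq y0 => h; rewrite e2 h mulr0.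
  by apply: (mulIf y'0); rewrite -e2 -e4.
have x'0 : x' != 0 by apply: contraNneq x0 => h; rewrite e1 h mulr0.
by apply: (mulIf x'0); rewrite -e1 -e3.
Qed.

Lemma sigma_uniq v u l l' : ~ (s1 v = 0 /\ t1 v = 0) -> ~ (s2 v = 0 /\ t2 v = 0) ->
  ~ (w1 v = 0 /\ w2 v = 0) -> l != 0 -> l' != 0 ->
  same_point u (sigma l v) -> same_point u (sigma l' v) -> l = l'.
Proof.
move=> h1 h2 hw l0 l'0 [m1 [m2 [_ [_ e]]]] [n1 [n2 [_ [_ e']]]].
move: (congr1 s1 e) (congr1 t1 e) (congr1 w1 e) (congr1 s2 e) (congr1 t2 e) (congr1 w2 e).
move: (congr1 s1 e') (congr1 t1 e') (congr1 w1 e') (congr1 s2 e') (congr1 t2 e') (congr1 w2 e').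
rewrite /sigma /tact !mk6E => b1 b2 b3 b4 b5 b6 a1 a2 a3 a4 a5 a6.
have em1 := same_scale h1 a1 a2 b1 b2.
have em2 := same_scale h2 a4 a5 b4 b5.
have [w0|w0] := eqVneq (w1 v) 0.
  have w20 : w2 v != 0 by apply/eqP => w20; apply: hw.
  apply: invr_inj; apply: (mulIf w20); by rewrite a6 b6 em2.
by apply: (mulIf w0); rewrite a3 b3 em1.
Qed.

Lemma sigma_inf v (Z : pt -> Prop) : ~ (s1 v = 0 /\ t1 v = 0) -> ~ (s2 v = 0 /\ t2 v = 0) ->
  ~ (w1 v = 0 /\ w2 v = 0) -> (forall l, l != 0 -> Z (sigma l v)) -> ~ finite_points Z.
Proof.
move=> h1 h2 hw hZ [l0 hl].
have [s hs] : exists s : seq C, forall l, l != 0 ->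
    (exists u, List.In u l0 /\ same_point u (sigma l v)) -> l \in s.
  elim: l0 {hl} => [|u l0 [s ih]]; first by exists [::] => l _ [u []].
  case: (classic (exists l, l != 0 /\ same_point u (sigma l v))) => [[l1 [l10 sp1]]|nl].
    exists (l1 :: s) => l l0' [u' [[<-|iu] sp]]; rewrite inE.
      by rewrite (sigma_uniq h1 h2 hw l0' l10 sp sp1) eqxx.
    by rewrite ih ?orbT //; exists u'.
  exists s => l l0' [u' [[<-|iu] sp]]; first by case: nl; exists l.
  by apply: ih => //; exists u'.
have [k hk] := exists_nat_notin s.
have k0 : k.+1%:R != 0 :> C by rewrite pnatr_eq0.
have [u [iu su]] := hl _ (hZ _ k0).
by move: hk; rewrite hs //; exists u.
Qed.

Lemma Z_sub_F a b c Z : irreducible_curve Z -> Defs.subsetP Z (Xabc a b c) -> G_invariant Z ->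
  Defs.subsetP Z (F1capF2 a b c).
Proof.
move=> [[wcZ [ne irr]] [nf prop]] sub [g1 [g2 [g3 g4]]] v Zv.
have [hU hX] := sub v Zv.
have [hU1 hU2] := hU.
have [hT1 hT2] : inU (tau1 v) by case: (sub _ (proj2 (g1 v) Zv)).
move: hT1 hT2; rewrite /tau1 !mk6E => hT1 hT2.
have q0 : s1 v = 0 -> t1 v = 0 -> qf a b c v = 0.
  by move=> x y; rewrite /qf x y; ring.
have q0' : s2 v = 0 -> t2 v = 0 -> qf a b c v = 0.
  by move=> x y; rewrite /qf x y; ring.
have nst1 : ~ (s1 v = 0 /\ t1 v = 0).
  move=> [x y]; have := q0 x y; rewrite -hX => /eqP.
  rewrite mulf_eq0 => /orP [/eqP w0|/eqP w0]; first by apply: hU1.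
  by apply: hT2.
have nst2 : ~ (s2 v = 0 /\ t2 v = 0).
  move=> [x y]; have := q0' x y; rewrite -hX => /eqP.
  rewrite mulf_eq0 => /orP [/eqP w0|/eqP w0]; last by apply: hU2.
  by apply: hT1.
case: (classic (w1 v = 0 /\ w2 v = 0)) => [[w10 w20]|nw].
  by split=> //; split=> //; rewrite -hX w10 mul0r.
exfalso.
pose Fb := fun u => Z u /\ s1 u * t1 v - t1 u * s1 v = 0 /\ s2 u * t2 v - t2 u * s2 v = 0.
have wcF : wclosed Fb.
  case: wcZ => hZU [ht [S hS]]; split; first by move=> u [/hZU].
  split.
    move=> u m1 m2 h1 h2 [Zu [e1 e2]]; split; first exact: ht.
    rewrite !tactE; split.
      by rewrite -!mulrA -mulrBr e1 mulr0.
    by rewrite -!mulrA -mulrBr e2 mulr0.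
  exists (fun p => S p \/ p = X0 * (t1 v)%:MP - X1 * (s1 v)%:MP \/
                        p = X3 * (t2 v)%:MP - X4 * (s2 v)%:MP) => u; split.
    move=> [/hS [hu hp] [e1 e2]]; split=> // p [/hp //|[->|->]];
      by rewrite !(mevalB, mevalM, mevalXU, mevalC).
  move=> [hu hp]; split.
    by apply/hS; split=> // p Sp; apply: hp; left.
  split.
    by have := hp _ (or_intror (or_introl erefl)); rewrite !(mevalB, mevalM, mevalXU, mevalC).
  by have := hp _ (or_intror (or_intror erefl)); rewrite !(mevalB, mevalM, mevalXU, mevalC).
have subF : Defs.subsetP Fb Z by move=> u [].
have nsub : ~ Defs.subsetP Z Fb.
  move=> h; have [_ [e2 _]] := h _ (proj2 (g2 v) Zv); have [_ [e3 _]] := h _ (proj2 (g3 v) Zv).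
  move: e2 e3; rewrite /tau2 /tau3 !mk6E => e2 e3.
  have st : s1 v * t1 v = 0.
    apply: (mulfI two_neq0); rewrite mulr0 -e3; ring.
  have tt : t1 v ^+ 2 = s1 v ^+ 2 by apply/eqP; rewrite -subr_eq0 -e2; apply/eqP; ring.
  apply: nst1; move/eqP: st; rewrite mulf_eq0 => /orP [/eqP s0|/eqP t0].
    split=> //; have : t1 v ^+ 2 == 0 by rewrite tt s0 expr0n.
    by rewrite expf_eq0 /= => /eqP.
  split=> //; have : s1 v ^+ 2 == 0 by rewrite -tt t0 expr0n.
  by rewrite expf_eq0 /= => /eqP.
have fF := prop Fb wcF subF nsub.
apply: (sigma_inf nst1 nst2 nw _ fF) => l l0.
split; first by apply/(g4 l v l0).
by rewrite /sigma !mk6E; split; ring.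
Qed.

Definition L6 : list (C * C) := [:: (1, 0); (0, 1); (1, 1); (1, -1); ('i, 1); (- 'i, 1)].

Lemma L6_nz p : List.In p L6 -> ~ (p.1 = 0 /\ p.2 = 0).
Proof.
by rewrite /L6 /= => -[<-|[<-|[<-|[<-|[<-|[<-|[]]]]]]] /= [x y];
  move: x y => /eqP; rewrite ?oner_eq0 // => _ /eqP; rewrite oner_eq0.
Qed.

Lemma quartic_pts x y : x * y * (x ^+ 4 - y ^+ 4) = 0 ->
  exists p, List.In p L6 /\ x * p.2 = y * p.1.
Proof.
have f : x ^+ 4 - y ^+ 4 = (x - y) * (x + y) * ((x - 'i * y) * (x + 'i * y)).
  have g : (x - 'i * y) * (x + 'i * y) = x ^+ 2 - 'i ^+ 2 * y ^+ 2 by ring.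
  rewrite sqrCi in g; rewrite g; ring.
rewrite f => /eqP; rewrite !mulf_eq0 => hh.
case/orP: hh => [/orP[]|/orP[/orP[]|/orP[]]] /eqP h.
- by exists (0, 1); split; [right; left | rewrite h /=; ring].
- by exists (1, 0); split; [left | rewrite h /=; ring].
- by exists (1, 1); split; [do 2 right; left | apply/eqP; rewrite -subr_eq0 /= !mulr1 h].
- exists (1, -1); split; first by do 3 right; left.
  have e : y = - x by apply/eqP; rewrite -addr_eq0 addrC h.
  by rewrite /= e; ring.
- exists ('i, 1); split; first by do 4 right; left.
  have e : x = 'i * y by apply/eqP; rewrite -subr_eq0 h.
  by rewrite /= e; ring.
- exists (- 'i, 1); split; first by do 5 right; left.
  have e : x = - ('i * y) by apply/eqP; rewrite -addr_eq0 h.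
  by rewrite /= e; ring.
Qed.

Lemma sing_generic a b c (Z : pt -> Prop) (Pm Qm : {mpoly C[6]}) (be ga : C) (g : pt -> pt) :
  be != 0 -> ga != 0 ->
  (forall v, qf a b c v = be * (mpoly.meval v Pm) ^+ 2 + ga * (mpoly.meval v Qm) ^+ 2) ->
  (forall v m1 m2, mpoly.meval (tact m1 m2 v) Pm = m1 * m2 * mpoly.meval v Pm) ->
  (forall v m1 m2, mpoly.meval (tact m1 m2 v) Qm = m1 * m2 * mpoly.meval v Qm) ->
  (forall v, mpoly.meval (g v) Pm = mpoly.meval v Pm) ->
  (forall v, mpoly.meval (g v) Qm = - mpoly.meval v Qm) ->
  (forall v, Z (g v) <-> Z v) ->
  (forall v, inU v -> w1 v = 0 -> w2 v = 0 -> mpoly.meval v Pm = 0 -> mpoly.meval v Qm = 0 ->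
     s1 v * t1 v * (s1 v ^+ 4 - t1 v ^+ 4) = 0 /\ s2 v * t2 v * (s2 v ^+ 4 - t2 v ^+ 4) = 0) ->
  irreducible_curve Z -> Defs.subsetP Z (F1capF2 a b c) -> False.
Proof.
move=> be0 ga0 hq hPt hQt hPg hQg hZg hpts [[wcZ [ne irr]] [nf prop]] sub.
set k := sqrtC be; set m := sqrtC (- ga).
have hk : k ^+ 2 = be by rewrite sqrtCK.
have hm : m ^+ 2 = - ga by rewrite sqrtCK.
have k0 : k != 0 by apply: contraNneq be0 => h; rewrite -hk h expr0n.
have m0 : m != 0 by apply: contraNneq ga0 => h; rewrite -oppr_eq0 -hm h expr0n.
pose lp (e : C) : {mpoly C[6]} := k%:MP * Pm + (e * m)%:MP * Qm.
have lpE e v : mpoly.meval v (lp e) = k * mpoly.meval v Pm + e * m * mpoly.meval v Qm.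
  by rewrite /lp !(mevalD, mevalM, mevalC).
pose L (e : C) := fun u => Z u /\ mpoly.meval u (lp e) = 0.
have wcL e : wclosed (L e).
  case: wcZ => hZU [ht [S hS]]; split; first by move=> u [/hZU].
  split.
    move=> u m1 m2 h1 h2 [Zu eu]; split; first exact: ht.
    by move: eu; rewrite !lpE hPt hQt => eu; rewrite -[RHS](mulr0 (m1 * m2)) -eu; ring.
  exists (fun p => S p \/ p = lp e) => u; split.
    by move=> [/hS [hu hp] eu]; split=> // p [/hp //|->].
  move=> [hu hp]; split; last by apply: hp; right.
  by apply/hS; split=> // p Sp; apply: hp; left.
have cover : forall u, Z u <-> (L 1 u \/ L (-1) u).
  move=> u; split; last by case=> -[].
  move=> Zu; have [hu [hq0 _]] := sub u Zu.
  have : mpoly.meval u (lp 1) * mpoly.meval u (lp (-1)) = 0.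
    by rewrite !lpE -hq0 hq -hk; rewrite (_ : ga = - m ^+ 2); [ring | rewrite hm opprK].
  move/eqP; rewrite mulf_eq0 => /orP [/eqP h|/eqP h]; [left|right]; by split.
have PQ0 : forall u, Z u -> mpoly.meval u Pm = 0 /\ mpoly.meval u Qm = 0.
  have gen e : e ^+ 2 = 1 -> Defs.subsetP Z (L e) -> forall u, Z u -> mpoly.meval u Pm = 0 /\ mpoly.meval u Qm = 0.
    move=> he hs u Zu; have [_ e1] := hs u Zu; have [_ e2] := hs (g u) (proj2 (hZg u) Zu).
    move: e1 e2; rewrite !lpE hPg hQg => e1 e2.
    have a1 : (k * mpoly.meval u Pm) * 2 = 0 by rewrite -[RHS](addr0 0) -{1}e1 -e2; ring.
    have a2 : (e * m * mpoly.meval u Qm) * 2 = 0 by rewrite -[RHS](subrr 0) -{1}e1 -e2; ring.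
    have e0 : e != 0 by apply/eqP => e00; move: he; rewrite e00 expr0n => /eqP; rewrite eq_sym oner_eq0.
    move/eqP: a1; rewrite !mulf_eq0 (negbTE k0) (negbTE two_neq0) orbF /= => /eqP ->.
    move/eqP: a2; rewrite !mulf_eq0 (negbTE e0) (negbTE m0) (negbTE two_neq0) orbF /= => /eqP ->.
    by [].
  case: (irr (L 1) (L (-1)) (wcL 1) (wcL (-1)) cover) => hs.
    by apply: (gen 1) => //; rewrite expr1n.
  by apply: (gen (-1)) => //; rewrite sqrrN expr1n.
apply: nf; apply: (@finite_of_lists _ L6 L6 L6_nz L6_nz) => v Zv.
have [hu [_ [hw1 hw2]]] := sub v Zv.
have [hP hQ] := PQ0 v Zv.
have [h1 h2] := hpts v hu hw1 hw2 hP hQ.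
by do 3 (split=> //); split; apply: quartic_pts.
Qed.

Definition lc (p1 p2 p3 p4 : C) : {mpoly C[6]} :=
  p1%:MP * (X0 * X3) + p2%:MP * (X1 * X4) + p3%:MP * (X0 * X4) + p4%:MP * (X1 * X3).

Lemma meval_lc p1 p2 p3 p4 v : mpoly.meval v (lc p1 p2 p3 p4) =
  p1 * (s1 v * s2 v) + p2 * (t1 v * t2 v) + p3 * (s1 v * t2 v) + p4 * (t1 v * s2 v).
Proof. by rewrite /lc !(mevalD, mevalM, mevalC, mevalXU). Qed.

Lemma lc_tact p1 p2 p3 p4 v m1 m2 :
  mpoly.meval (tact m1 m2 v) (lc p1 p2 p3 p4) = m1 * m2 * mpoly.meval v (lc p1 p2 p3 p4).
Proof. by rewrite !meval_lc !tactE; ring. Qed.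

Lemma pair_kill (X s t : C) : ~ (s = 0 /\ t = 0) -> X * s = 0 -> X * t = 0 -> X = 0.
Proof.
move=> h e1 e2; apply/eqP; apply: contraT => X0'.
exfalso; apply: h; split; apply/eqP.
  by move/eqP: e1; rewrite mulf_eq0 (negbTE X0').
by move/eqP: e2; rewrite mulf_eq0 (negbTE X0').
Qed.

Lemma inU_st v : inU v -> w1 v = 0 -> w2 v = 0 ->
  ~ (s1 v = 0 /\ t1 v = 0) /\ ~ (s2 v = 0 /\ t2 v = 0).
Proof. by move=> [h1 h2] e1 e2; split=> -[x y]; [apply: h1 | apply: h2]. Qed.

Definition NEX (a b c : C) := ~ (exists e1 e2 : C, (e1 = 1 \/ e1 = -1) /\ (e2 = 1 \/ e2 = -1) /\
                       b = e1 * a /\ c = e2 * a).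

Lemma sign_cases (p : C) : p = 1 \/ p = -1 -> p ^+ 2 = 1.
Proof. by case=> ->; rewrite ?sqrrN expr1n. Qed.

Lemma sing_tau3 a b c Z (p2 q4 : C) : NEX a b c ->
  (p2 = 1 \/ p2 = -1) -> (q4 = 1 \/ q4 = -1) ->
  a = p2 * (b + c) / 2 + q4 * (b - c) / 2 ->
  G_inv_curve_in_X a b c Z -> False.
Proof.
move=> nex hp hq ha [cZ [subX gZ]].
have sub := Z_sub_F cZ subX gZ.
have [g1 [g2 [g3 g4]]] := gZ.
have hp2 := sign_cases hp; have hq2 := sign_cases hq.
apply: (@sing_generic a b c Z (lc 1 p2 0 0) (lc 0 0 1 q4) ((b + c) / 4) ((b - c) / 4) tau3 _ _ _ _ _ _ _ g3 _ cZ sub).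
- apply/eqP => h; apply: nex; exists q4, (- q4); split; first exact: hq; split.
    by case: hq => ->; [right | left]; rewrite ?opprK.
  have bc : b + c = 0 by move/eqP: h; rewrite mulf_eq0 invr_eq0 (negbTE four_neq0) orbF => /eqP.
  have hc : c = - b by apply: (addrI b); rewrite bc subrr.
  by rewrite ha hc; split; case: hp => -> ; case: hq => ->; field.
- apply/eqP => h; apply: nex; exists p2, p2; split; first exact: hp; split; first exact: hp.
  have bc : b - c = 0 by move/eqP: h; rewrite mulf_eq0 invr_eq0 (negbTE four_neq0) orbF => /eqP.
  have hc : c = b by apply/eqP; rewrite eq_sym -subr_eq0 bc.
  by rewrite ha hc; split; case: hp => -> ; case: hq => ->; field.
- by move=> v; rewrite !meval_lc ha /qf; case: hp => -> ; case: hq => ->; field.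
- by move=> v m1 m2; rewrite lc_tact.
- by move=> v m1 m2; rewrite lc_tact.
- by move=> v; rewrite !meval_lc /tau3 !mk6E; ring.
- by move=> v; rewrite !meval_lc /tau3 !mk6E; ring.
- move=> v hu hw1 hw2; rewrite !meval_lc => hP hQ.
  have [st1 st2] := inU_st hu hw1 hw2.
  have X1 : s1 v ^+ 2 - p2 * q4 * t1 v ^+ 2 = 0.
    apply: (pair_kill st2).
      have -> : (s1 v ^+ 2 - p2 * q4 * t1 v ^+ 2) * s2 v =
        s1 v * (1 * (s1 v * s2 v) + p2 * (t1 v * t2 v) + 0 * (s1 v * t2 v) + 0 * (t1 v * s2 v))
        - p2 * t1 v * (0 * (s1 v * s2 v) + 0 * (t1 v * t2 v) + 1 * (s1 v * t2 v) + q4 * (t1 v * s2 v)).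
        by ring.
      by rewrite hP hQ !mulr0 subr0.
    have -> : (s1 v ^+ 2 - p2 * q4 * t1 v ^+ 2) * t2 v =
      s1 v * (0 * (s1 v * s2 v) + 0 * (t1 v * t2 v) + 1 * (s1 v * t2 v) + q4 * (t1 v * s2 v))
      - q4 * t1 v * (1 * (s1 v * s2 v) + p2 * (t1 v * t2 v) + 0 * (s1 v * t2 v) + 0 * (t1 v * s2 v)).
      by ring.
    by rewrite hP hQ !mulr0 subr0.
  have X2 : s2 v ^+ 2 - p2 * q4 * t2 v ^+ 2 = 0.
    apply: (pair_kill st1).
      have -> : (s2 v ^+ 2 - p2 * q4 * t2 v ^+ 2) * s1 v =
        s2 v * (1 * (s1 v * s2 v) + p2 * (t1 v * t2 v) + 0 * (s1 v * t2 v) + 0 * (t1 v * s2 v))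
        - p2 * q4 * t2 v * (0 * (s1 v * s2 v) + 0 * (t1 v * t2 v) + 1 * (s1 v * t2 v) + q4 * (t1 v * s2 v)).
        by case: hq hq2 => -> _; ring.
      by rewrite hP hQ !mulr0 subr0.
    have -> : (s2 v ^+ 2 - p2 * q4 * t2 v ^+ 2) * t1 v =
      q4 * s2 v * (0 * (s1 v * s2 v) + 0 * (t1 v * t2 v) + 1 * (s1 v * t2 v) + q4 * (t1 v * s2 v))
      - q4 * t2 v * (1 * (s1 v * s2 v) + p2 * (t1 v * t2 v) + 0 * (s1 v * t2 v) + 0 * (t1 v * s2 v)).
      by case: hq hq2 => -> _; ring.
    by rewrite hP hQ !mulr0 subr0.
  have pq2 : (p2 * q4) ^+ 2 = 1 by rewrite exprMn hp2 hq2 mulr1.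
  split.
    have -> : s1 v * t1 v * (s1 v ^+ 4 - t1 v ^+ 4) =
      s1 v * t1 v * (s1 v ^+ 2 - p2 * q4 * t1 v ^+ 2) * (s1 v ^+ 2 + p2 * q4 * t1 v ^+ 2)
      + s1 v * t1 v * ((p2 * q4) ^+ 2 - 1) * t1 v ^+ 4 by ring.
    by rewrite X1 pq2 subrr !mulr0 !mul0r addr0.
  have -> : s2 v * t2 v * (s2 v ^+ 4 - t2 v ^+ 4) =
    s2 v * t2 v * (s2 v ^+ 2 - p2 * q4 * t2 v ^+ 2) * (s2 v ^+ 2 + p2 * q4 * t2 v ^+ 2)
    + s2 v * t2 v * ((p2 * q4) ^+ 2 - 1) * t2 v ^+ 4 by ring.
  by rewrite X2 pq2 subrr !mulr0 !mul0r addr0.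
Qed.

Lemma sing_tau2 a b c Z (d e : C) : NEX a b c ->
  (d = 1 /\ e = 0) \/ (d = 0 /\ e = 1) -> c = (d - e) * b ->
  G_inv_curve_in_X a b c Z -> False.
Proof.
move=> nex hde hc [cZ [subX gZ]].
have sub := Z_sub_F cZ subX gZ.
have [g1 [g2 [g3 g4]]] := gZ.
apply: (@sing_generic a b c Z (lc d d e e) (lc d (- d) e (- e)) ((a + b) / 4) ((b - a) / 4)
   tau2 _ _ _ _ _ _ _ g2 _ cZ sub).
- apply/eqP => h; apply: nex; exists (-1), (- (d - e)); split; first by right.
  split; first by case: hde => -[-> ->]; rewrite ?subr0 ?sub0r ?opprK; [right | left].
  have ab : a + b = 0 by move/eqP: h; rewrite mulf_eq0 invr_eq0 (negbTE four_neq0) orbF => /eqP.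
  have hb : b = - a by apply: (addrI a); rewrite ab subrr.
  by rewrite hc hb; split; ring.
- apply/eqP => h; apply: nex; exists 1, (d - e); split; first by left.
  split; first by case: hde => -[-> ->]; rewrite ?subr0 ?sub0r; [left | right].
  have ab : b - a = 0 by move/eqP: h; rewrite mulf_eq0 invr_eq0 (negbTE four_neq0) orbF => /eqP.
  have hb : b = a by apply/eqP; rewrite -subr_eq0 ab.
  by rewrite hc hb; split; ring.
- by move=> v; rewrite !meval_lc hc /qf; case: hde => -[-> ->]; field.
- by move=> v m1 m2; rewrite lc_tact.
- by move=> v m1 m2; rewrite lc_tact.
- by move=> v; rewrite !meval_lc /tau2 !mk6E; ring.
- by move=> v; rewrite !meval_lc /tau2 !mk6E; ring.
- move=> v hu hw1 hw2; rewrite !meval_lc => hP hQ.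
  have [st1 st2] := inU_st hu hw1 hw2.
  have hA : d * (s1 v * s2 v) + e * (s1 v * t2 v) = 0.
    apply: (mulIf two_neq0); rewrite mul0r.
    have -> : (d * (s1 v * s2 v) + e * (s1 v * t2 v)) * 2 =
      (d * (s1 v * s2 v) + d * (t1 v * t2 v) + e * (s1 v * t2 v) + e * (t1 v * s2 v)) +
      (d * (s1 v * s2 v) + - d * (t1 v * t2 v) + e * (s1 v * t2 v) + - e * (t1 v * s2 v)) by ring.
    by rewrite hP hQ addr0.
  have hB : d * (t1 v * t2 v) + e * (t1 v * s2 v) = 0.
    apply: (mulIf two_neq0); rewrite mul0r.
    have -> : (d * (t1 v * t2 v) + e * (t1 v * s2 v)) * 2 =
      (d * (s1 v * s2 v) + d * (t1 v * t2 v) + e * (s1 v * t2 v) + e * (t1 v * s2 v)) -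
      (d * (s1 v * s2 v) + - d * (t1 v * t2 v) + e * (s1 v * t2 v) + - e * (t1 v * s2 v)) by ring.
    by rewrite hP hQ subr0.
  case: hde => -[hd he]; rewrite hd he ?mul1r ?mul0r ?addr0 ?add0r in hA hB.
  + split.
      apply: (pair_kill st2).
        have -> : s1 v * t1 v * (s1 v ^+ 4 - t1 v ^+ 4) * s2 v =
          (s1 v * s2 v) * (t1 v * (s1 v ^+ 4 - t1 v ^+ 4)) by ring.
        by rewrite hA mul0r.
      have -> : s1 v * t1 v * (s1 v ^+ 4 - t1 v ^+ 4) * t2 v =
        (t1 v * t2 v) * (s1 v * (s1 v ^+ 4 - t1 v ^+ 4)) by ring.
      by rewrite hB mul0r.
    apply: (pair_kill st1).
      have -> : s2 v * t2 v * (s2 v ^+ 4 - t2 v ^+ 4) * s1 v =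
        (s1 v * s2 v) * (t2 v * (s2 v ^+ 4 - t2 v ^+ 4)) by ring.
      by rewrite hA mul0r.
    have -> : s2 v * t2 v * (s2 v ^+ 4 - t2 v ^+ 4) * t1 v =
      (t1 v * t2 v) * (s2 v * (s2 v ^+ 4 - t2 v ^+ 4)) by ring.
    by rewrite hB mul0r.
  + split.
      apply: (pair_kill st2).
        have -> : s1 v * t1 v * (s1 v ^+ 4 - t1 v ^+ 4) * s2 v =
          (t1 v * s2 v) * (s1 v * (s1 v ^+ 4 - t1 v ^+ 4)) by ring.
        by rewrite hB mul0r.
      have -> : s1 v * t1 v * (s1 v ^+ 4 - t1 v ^+ 4) * t2 v =
        (s1 v * t2 v) * (t1 v * (s1 v ^+ 4 - t1 v ^+ 4)) by ring.
      by rewrite hA mul0r.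
    apply: (pair_kill st1).
      have -> : s2 v * t2 v * (s2 v ^+ 4 - t2 v ^+ 4) * s1 v =
        (s1 v * t2 v) * (s2 v * (s2 v ^+ 4 - t2 v ^+ 4)) by ring.
      by rewrite hA mul0r.
    have -> : s2 v * t2 v * (s2 v ^+ 4 - t2 v ^+ 4) * t1 v =
      (t1 v * s2 v) * (t2 v * (s2 v ^+ 4 - t2 v ^+ 4)) by ring.
    by rewrite hB mul0r.
Qed.

Lemma sqr_eq_cases (x y : C) : x ^+ 2 - y ^+ 2 = 0 -> x = y \/ x = - y.
Proof.
rewrite subr_sqr => /eqP; rewrite mulf_eq0 => /orP [/eqP h|/eqP h].
  by left; apply/eqP; rewrite -subr_eq0 h.
by right; apply/eqP; rewrite -addr_eq0 h.
Qed.

Theorem mainTheorem17 (a b c : C) :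
  ~ (a = 0 /\ b = 0 /\ c = 0) ->
  ~ (exists e1 e2 : C, (e1 = 1 \/ e1 = -1) /\ (e2 = 1 \/ e2 = -1) /\
                       b = e1 * a /\ c = e2 * a) ->
  ~ (b = 0 /\ c = 0) -> ~ (a = 0 /\ c = 0) -> ~ (a = 0 /\ b = 0) ->
  ((a ^+ 2 - b ^+ 2) * (a ^+ 2 - c ^+ 2) * (b ^+ 2 - c ^+ 2) != 0 ->
     forall Z : pt -> Prop,
       G_inv_curve_in_X a b c Z <-> (forall v, Z v <-> F1capF2 a b c v)) /\
  ((a ^+ 2 - b ^+ 2) * (a ^+ 2 - c ^+ 2) * (b ^+ 2 - c ^+ 2) = 0 ->
     forall Z : pt -> Prop, ~ G_inv_curve_in_X a b c Z).
Proof.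
move=> n0 nex nbc nac nab; split.
  rewrite !mulf_eq0 !negb_or => /andP [/andP [h1 h2] h3].
  have H : Hyp a b c by split.
  move=> Z; split.
    move=> [cZ [subX gZ]].
    have sub := Z_sub_F cZ subX gZ.
    have [[wcZ _] [nf _]] := cZ.
    move=> v; split; first exact: sub.
    exact: (curveF H (wclosed_wclosed' wcZ) sub nf).
  move=> e.
  have -> : Z = F1capF2 a b c.
    by apply: functional_extensionality => v; apply: propositional_extensionality.
  split; first exact: F_curve.
  split; last exact: F_Ginv.
  by move=> v [hu [hq [h1' h2']]]; split=> //; rewrite h1' mul0r hq.
move=> /eqP; rewrite !mulf_eq0 => /orP [/orP [] |] /eqP /sqr_eq_cases [] h Z.
- apply: (@sing_tau3 a b c Z 1 1 nex); [by left | by left | by rewrite h; field].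
- apply: (@sing_tau3 a b c Z (-1) (-1) nex); [by right | by right | by rewrite h; field].
- apply: (@sing_tau3 a b c Z 1 (-1) nex); [by left | by right | by rewrite h; field].
- apply: (@sing_tau3 a b c Z (-1) 1 nex); [by right | by left | by rewrite h; field].
- apply: (@sing_tau2 a b c Z 1 0 nex); [by left | by rewrite h subr0 mul1r].
- apply: (@sing_tau2 a b c Z 0 1 nex); [by right | by rewrite h sub0r mulN1r opprK].
Qed.
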